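(* Let $P$ be a finite poset, $\epsilon\in\{1,-1\}$, $n\ge2$ an integer and $\xi\in S^{(n\epsilon)}$. Define $\xi_1\in\mathbb Z^{P^-}$ by $\xi_1(w)=\lfloor \xi(w)/n\rfloor$ if $w$ is a maximal element of $P$ or $w=-\infty$, and $\xi_1(w)=\lfloor \xi^{+\uparrow}(w)/n\rfloor-\lfloor \xi^{+\prime\uparrow}(w)/n\rfloor$ otherwise. Then (a) $\xi_1^{+\uparrow}(z)=\lfloor \xi^{+\uparrow}(z)/n\rfloor$ for every $z\in P$, and $\max\{\xi_1^+(C)\}=\lfloor \tfrac1n\max\{\xi^+(C)\}\rfloor$, maxima over maximal chains $C$ of $P$; (b) $\xi_1\in S^{(\epsilon)}$.
   Context: $P^-=P\cup\{-\infty\}$, $P^+=P\cup\{+\infty\}$, with $-\infty<z<+\infty$ for all $z\in P$; $a\lessdot b$ means $b$ covers $a$. $\xi^+(B)=\sum_{b\in B}\xi(b)$. For $z\in P$: $\xi^{+\uparrow}(z)=\max\sum_{\ell=0}^s\xi(z_\ell)$ and $\xi^{+\prime\uparrow}(z)=\max\sum_{\ell=1}^s\xi(z_\ell)$ (empty sum $0$), maxima over all $z=z_0\lessdot z_1\lessdot\cdots\lessdot z_s\lessdot+\infty$ in $P^+$. For $m\in\mathbb Z$, $S^{(m)}=\{\xi\in\mathbb Z^{P^-}:\xi(x)\ge m\ \forall x\in P,\ \xi(-\infty)\ge\xi^+(C)+m$ for every maximal chain $C$ of $P\}$. *)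

(* Defs.v *)
From HB Require Import structures.
From mathcomp Require Import all_boot all_order all_algebra.
Set Implicit Arguments. Unset Strict Implicit. Unset Printing Implicit Defensive.
Import Order.TTheory GRing.Theory Num.Theory.
Local Open Scope order_scope.

Section Poset.
Context {d : Order.disp_t} {P : finPOrderType d}.

Definition maxelt (x : P) : bool := [forall y : P, ~~ (x < y)].

Definition covers (x y : P) : bool :=
  (x < y) && [forall w : P, ~~ ((x < w) && (w < y))].

(* s = [z_1;...;z_s] is such that z = z_0 <. z_1 <. ... <. z_s <. +infty in P^+ *)
Definition upchain (z : P) (s : seq P) : bool :=
  path covers z s && maxelt (last z s).

(* all sequences of elements of P of length < #|P|.+1 (any upchain is strictly
   increasing, so has length <= #|P| - 1; hence this enumeration is exhaustive) *)
Definition short_seqs : seq (seq P) :=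
  flatten [seq [seq tval t | t : k.-tuple P] | k <- iota 0 #|P|.+1].

Definition upchains (z : P) : seq (seq P) := [seq s <- short_seqs | upchain z s].

Definition maxl (l : seq int) : int := foldr Num.max (head 0%R l) l.

(* xi^{+ up}(z) : max over upchains of sum_{l=0}^s xi(z_l) *)
Definition upsum (xi : P -> int) (z : P) : int :=
  maxl [seq (\sum_(x <- z :: s) xi x)%R | s <- upchains z].

(* xi^{+' up}(z) : max over upchains of sum_{l=1}^s xi(z_l) *)
Definition upsum' (xi : P -> int) (z : P) : int :=
  maxl [seq (\sum_(x <- s) xi x)%R | s <- upchains z].

Definition is_chain (C : {set P}) : bool :=
  [forall x in C, forall y in C, (x <= y) || (y <= x)].

Definition maxchain (C : {set P}) : bool :=
  is_chain C && [forall D : {set P}, (is_chain D && (C \subset D)) ==> (D == C)].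

Definition chainsum (xi : P -> int) (C : {set P}) : int := (\sum_(b in C) xi b)%R.

Definition maxchainsum (xi : P -> int) : int :=
  maxl [seq chainsum xi C | C <- enum [set C : {set P} | maxchain C]].

(* Elements of Z^{P^-} are functions option P -> int, None standing for -infty. *)
Definition restr (xi : option P -> int) : P -> int := fun x => xi (Some x).

Definition inS (m : int) (xi : option P -> int) : Prop :=
  (forall x : P, (m <= xi (Some x))%R) /\
  (forall C : {set P}, maxchain C -> (chainsum (restr xi) C + m <= xi None)%R).

(* xi_1 from the theorem; floor(a/n) is the intdiv quotient (a %/ n)%Z, n > 0 *)
Definition xi1 (n : nat) (xi : option P -> int) : option P -> int :=
  fun w => match w with
  | None => (xi None %/ n%:Z)%Z
  | Some x => if maxelt x then (xi (Some x) %/ n%:Z)%Z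
              else ((upsum (restr xi) x %/ n%:Z)%Z - (upsum' (restr xi) x %/ n%:Z)%Z)%R
  end.

End Poset.

(* Main.v *)
Require Import Defs.
From HB Require Import structures.
From mathcomp Require Import all_boot all_order all_algebra.
Import Order.TTheory GRing.Theory Num.Theory.
Set Implicit Arguments. Unset Strict Implicit. Unset Printing Implicit Defensive.

Section Aux.
Local Open Scope ring_scope.
Local Open Scope order_scope.
Context {d : Order.disp_t} {P : finPOrderType d}.

Lemma foldr_max_ub (l : seq int) a x : x \in a :: l -> x <= foldr Num.max a l.
Proof.
elim: l x => [|y l IH] x /=; first by rewrite !inE => /eqP ->.
rewrite !inE => /orP [/eqP ->|/orP [/eqP ->|H]]; rewrite le_max.
- by rewrite (IH a) ?inE ?eqxx ?orbT.
- by rewrite lexx.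
- by rewrite (IH x) ?inE ?H ?orbT.
Qed.

Lemma foldr_max_mem (l : seq int) a : foldr Num.max a l \in a :: l.
Proof.
elim: l => [|y l IH] /=; first by rewrite inE.
rewrite /Num.max; case: ifP => _; rewrite !inE ?eqxx ?orbT //.
by move: IH; rewrite !inE => /orP [->|->]; rewrite ?orbT.
Qed.

Lemma maxl_ub (l : seq int) x : x \in l -> x <= maxl l.
Proof. by move=> H; apply: foldr_max_ub; rewrite !inE H orbT. Qed.

Lemma maxl_mem (l : seq int) : l != [::] -> maxl l \in l.
Proof.
case: l => [|a l] // _; have := foldr_max_mem (a :: l) a.
by rewrite /maxl /= inE => /orP [/eqP ->|]; rewrite ?inE ?eqxx.
Qed.

Lemma upchain_nil (z : P) : upchain z [::] = maxelt z.
Proof. by rewrite /upchain /= . Qed.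

Lemma upchain_cons (z w : P) t : upchain z (w :: t) = covers z w && upchain w t.
Proof. by rewrite /upchain /= andbA. Qed.

Lemma upchain_sorted (z : P) s : upchain z s -> path (fun x y => x < y) z s.
Proof.
case/andP=> H _; apply: sub_path H => x y /andP [] //.
Qed.

Lemma upchain_uniq (z : P) s : upchain z s -> uniq (z :: s).
Proof.
move/upchain_sorted => H.
have := sorted_uniq (@lt_trans _ P) (@ltxx _ P) (H : sorted _ (z :: s)).
done.
Qed.

Lemma mem_upchains (z : P) s : (s \in upchains z) = upchain z s.
Proof.
rewrite /upchains mem_filter; case U: (upchain z s) => //=.
have Hs : (size s <= #|P|.-1)%N.
  have := card_uniqP (upchain_uniq U); rewrite /= => E.
  have := max_card (mem (z :: s)). rewrite E /=. 
  by case: #|P| => //.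
rewrite /short_seqs; apply/flattenP.
exists [seq tval t | t : (size s).-tuple P].
  apply/mapP; exists (size s) => //; rewrite mem_iota /= add0n ltnS.
  by apply: leq_trans Hs (leq_pred _).
by rewrite [X in X \in _](_ : s = tval (in_tuple s)) //; apply: map_f; rewrite mem_enum.
Qed.


Definition ht (z : P) := #|[set y | z < y]|.

Lemma ht_lt (z w : P) : z < w -> (ht w < ht z)%N.
Proof.
move=> zw; rewrite /ht; apply: proper_card; apply/properP; split.
  by apply/subsetP => y; rewrite !inE => /(lt_trans zw).
by exists w; rewrite !inE ?zw ?ltxx.
Qed.

Lemma exists_cover (z : P) : ~~ maxelt z -> exists w, covers z w.
Proof.
move=> /forallPn [y0]; rewrite negbK => zy0.
pose f (y : P) := #|[set v | v < y]|.
case: (@arg_minnP P y0 (fun y => z < y) f zy0) => w zw Hmin.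
exists w; rewrite /covers zw /=; apply/forallP => v; apply/negP => /andP [zv vw].
have := Hmin v zv; rewrite leqNgt => /negP; apply.
apply: proper_card; apply/properP; split.
  by apply/subsetP => u; rewrite !inE => /lt_trans; apply.
by exists v; rewrite !inE ?vw ?ltxx.
Qed.

Lemma exists_upchain (z : P) : exists s, upchain z s.
Proof.
have [k Hk] : exists k, (ht z < k)%N by exists (ht z).+1.
elim: k z Hk => // k IH z Hk.
case M: (maxelt z); first by exists [::]; rewrite upchain_nil.
case: (exists_cover (negbT M)) => w zw.
have : (ht w < k)%N.
  rewrite ltnS in Hk; apply: leq_trans Hk; apply: ht_lt; by case/andP: zw.
case/IH => t Ht; exists (w :: t); by rewrite upchain_cons zw.
Qed.

Lemma upchains_nil (z : P) : upchains z != [::].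
Proof.
case: (exists_upchain z) => s Hs; apply/eqP => E.
by move: Hs; rewrite -mem_upchains E.
Qed.

Lemma upsum_ub g (z : P) s : upchain z s -> \sum_(x <- z :: s) g x <= upsum g z.
Proof. by move=> H; apply: maxl_ub; apply: map_f; rewrite mem_upchains. Qed.

Lemma upsum_ex g (z : P) : exists2 s, upchain z s & upsum g z = \sum_(x <- z :: s) g x.
Proof.
have : upsum g z \in [seq \sum_(x <- z :: s) g x | s <- upchains z].
  by apply: maxl_mem; rewrite -size_eq0 size_map size_eq0 upchains_nil.
by case/mapP => s; rewrite mem_upchains => H ->; exists s.
Qed.

Lemma upsum'_ub g (z : P) s : upchain z s -> \sum_(x <- s) g x <= upsum' g z.
Proof. by move=> H; apply: maxl_ub; apply: map_f; rewrite mem_upchains. Qed.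

Lemma upsum'_ex g (z : P) : exists2 s, upchain z s & upsum' g z = \sum_(x <- s) g x.
Proof.
have : upsum' g z \in [seq \sum_(x <- s) g x | s <- upchains z].
  by apply: maxl_mem; rewrite -size_eq0 size_map size_eq0 upchains_nil.
by case/mapP => s; rewrite mem_upchains => H ->; exists s.
Qed.

Lemma upsumE g (z : P) : upsum g z = g z + upsum' g z.
Proof.
apply/eqP; rewrite eq_le; apply/andP; split.
  case: (upsum_ex g z) => s Hs ->; rewrite big_cons lerD2l.
  exact: upsum'_ub.
case: (upsum'_ex g z) => s Hs ->; by have := upsum_ub g Hs; rewrite big_cons.
Qed.

Lemma upsum'_max g (z : P) : maxelt z -> upsum' g z = 0.
Proof.
move=> M; case: (upsum'_ex g z) => [[|w t]] Hs ->; first by rewrite big_nil.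
move: Hs; rewrite upchain_cons => /andP [/andP [zw _] _].
by move/forallP: M => /(_ w); rewrite zw.
Qed.

Lemma upsum'_cover_ub g (z w : P) : covers z w -> upsum g w <= upsum' g z.
Proof.
move=> zw; case: (upsum_ex g w) => t Ht ->; apply: upsum'_ub.
by rewrite upchain_cons zw.
Qed.

Lemma upsum'_cover_ex g (z : P) : ~~ maxelt z ->
  exists2 w, covers z w & upsum' g z = upsum g w.
Proof.
move=> M; case: (upsum'_ex g z) => [[|w t]] Hs E.
  by move: Hs; rewrite upchain_nil (negbTE M).
move: Hs; rewrite upchain_cons => /andP [zw Ht]; exists w => //.
apply/eqP; rewrite eq_le upsum'_cover_ub // andbT E; exact: upsum_ub.
Qed.


Lemma xi1_upsum (n : nat) (xi : option P -> int) (z : P) :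
  upsum (restr (xi1 n xi)) z = (upsum (restr xi) z %/ n%:Z)%Z.
Proof.
set g := restr xi; set g1 := restr (xi1 n xi).
have [k Hk] : exists k, (ht z < k)%N by exists (ht z).+1.
elim: k z Hk => // k IH z Hk.
have hw : forall w, covers z w -> (ht w < k)%N.
  move=> w zw; rewrite ltnS in Hk; apply: leq_trans Hk; apply: ht_lt.
  by case/andP: zw.
case M: (maxelt z).
  by rewrite !upsumE !upsum'_max // !addr0 /g1 /restr /= M.
rewrite [upsum g1 z]upsumE.
have -> : g1 z = (upsum g z %/ n)%Z - (upsum' g z %/ n)%Z by rewrite /g1 /restr /= M.
have -> : upsum' g1 z = (upsum' g z %/ n)%Z.
  apply/eqP; rewrite eq_le; apply/andP; split.
    case: (upsum'_cover_ex g1 (negbT M)) => w zw ->; rewrite IH ?hw //.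
    by apply: lez_pdiv2r => //; exact: upsum'_cover_ub.
  case: (upsum'_cover_ex g (negbT M)) => w zw ->; rewrite -IH ?hw //.
  exact: upsum'_cover_ub.
by rewrite subrK.
Qed.


Definition minimal (z : P) := [forall y : P, ~~ (y < z)].
Definition seqset (s : seq P) : {set P} := [set x | x \in s].

Lemma seqset_cons x s : seqset (x :: s) = x |: seqset s.
Proof. by apply/setP => y; rewrite !inE. Qed.

Lemma is_chainP (C : {set P}) :
  reflect (forall x y, x \in C -> y \in C -> (x <= y) || (y <= x)) (is_chain C).
Proof.
apply: (iffP forall_inP) => H.
  by move=> x y xC yC; move/forall_inP: (H x xC) => /(_ y yC).
by move=> x xC; apply/forall_inP => y yC; apply: H.
Qed.

Lemma chain_sub (C D : {set P}) : D \subset C -> is_chain C -> is_chain D.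
Proof.
move=> /subsetP DC /is_chainP H; apply/is_chainP => x y xD yD; apply: H; exact: DC.
Qed.

Lemma chainU1 (v : P) C : is_chain C -> (forall x, x \in C -> (v <= x) || (x <= v)) ->
  is_chain (v |: C).
Proof.
move=> /is_chainP H Hv; apply/is_chainP => x y; rewrite !inE.
case/orP => [/eqP ->|xC]; case/orP => [/eqP ->|yC]; rewrite ?lexx //.
- exact: Hv.
- by rewrite orbC; apply: Hv.
- exact: H.
Qed.

Lemma chain_min (C : {set P}) x0 : is_chain C -> x0 \in C ->
  exists2 w, w \in C & forall y, y \in C -> w <= y.
Proof.
move=> /is_chainP H x0C.
pose f (y : P) := #|[set v | v < y]|.
case: (@arg_minnP P x0 (fun y => y \in C) f x0C) => w wC Hmin.
exists w => // y yC; case/orP: (H w y wC yC) => // yw.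
case: (eqVneq y w) => [-> //|ne].
have yw' : y < w by rewrite lt_neqAle ne yw.
have := Hmin y yC; rewrite leqNgt => /negP; case.
apply: proper_card; apply/properP; split.
  by apply/subsetP => u; rewrite !inE => /lt_trans; apply.
by exists y; rewrite !inE ?yw' ?ltxx.
Qed.

Lemma saturated_upchain k (C : {set P}) (z : P) : (#|C| < k)%N ->
  z \in C -> is_chain C -> (forall y, y \in C -> z <= y) ->
  (forall D, is_chain D -> C \subset D -> (forall y, y \in D -> z <= y) -> D = C) ->
  exists2 s, upchain z s & C = seqset (z :: s).
Proof.
elim: k C z => // k IH C z Hk zC Cch Cz Csat.
have CE : C = z |: (C :\ z) by rewrite setD1K.
case: (set_0Vmem (C :\ z)) => [E|[x0 x0C']].
  exists [::].
    rewrite upchain_nil; apply/forallP => y; apply/negP => zy.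
    have : y |: C = C.
      apply: Csat.
      - apply: chainU1 => // x; rewrite CE E setU0 inE => /eqP ->.
        by rewrite (ltW zy) orbT.
      - by apply/subsetP => u uC; rewrite !inE uC orbT.
      - move=> u; rewrite !inE => /orP [/eqP ->|]; [exact: ltW | exact: Cz].
    move/setP => /(_ y); rewrite !inE eqxx /= => /esym yC.
    have : y \in C :\ z by rewrite !inE yC andbT; apply/eqP => yz; move: zy; rewrite yz ltxx.
    by rewrite E inE.
  by rewrite CE E setU0 seqset_cons; apply/setP => u; rewrite !inE orbF.
have C'ch : is_chain (C :\ z) by apply: chain_sub Cch; exact: subD1set.
case: (chain_min C'ch x0C') => w wC' Hw.
move: (wC'); rewrite !inE => /andP [wz wC].
have zw : z < w by rewrite lt_neqAle eq_sym wz Cz.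
have cov : covers z w.
  rewrite /covers zw /=; apply/forallP => v; apply/negP => /andP [zv vw].
  have : v |: C = C.
    apply: Csat.
    - apply: chainU1 => // x xC; case: (eqVneq x z) => [->|xz].
        by rewrite (ltW zv) orbT.
      have : x \in C :\ z by rewrite !inE xz xC.
      by move/Hw => wx; rewrite (ltW (lt_le_trans vw wx)).
    - by apply/subsetP => u uC; rewrite !inE uC orbT.
    - move=> u; rewrite !inE => /orP [/eqP ->|]; [exact: ltW | exact: Cz].
  move/setP => /(_ v); rewrite !inE eqxx /= => /esym vC.
  have : v \in C :\ z.
    by rewrite !inE vC andbT; apply/eqP => vz; move: zv; rewrite vz ltxx.
  by move/Hw => wv; move: (lt_le_trans vw wv); rewrite ltxx.
have Hk' : (#|C :\ z| < k)%N.
  by move: Hk; rewrite (cardsD1 z C) zC add1n ltnS.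
case: (IH (C :\ z) w Hk' wC' C'ch Hw).
  move=> D Dch C'D Dw.
  have E : z |: D = C.
    apply: Csat.
    - apply: chainU1 => // x /Dw wx; by rewrite (ltW (lt_le_trans zw wx)).
    - by rewrite CE; apply: setUS.
    - move=> u; rewrite !inE => /orP [/eqP -> //|/Dw]; apply: le_trans (ltW zw).
  apply/eqP; rewrite eqEsubset C'D andbT; apply/subsetP => u uD.
  rewrite !inE -E inE uD orbT andbT; apply/eqP => uz.
  by move: (lt_le_trans zw (Dw u uD)); rewrite uz ltxx.
move=> t Ht C'E; exists (w :: t); first by rewrite upchain_cons cov.
by rewrite CE C'E [seqset (z :: _)]seqset_cons.
Qed.


Lemma maxchainP (C : {set P}) : maxchain C ->
  is_chain C /\ forall D, is_chain D -> C \subset D -> D = C.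
Proof.
case/andP => ch /forallP H; split => // D Dch CD.
by apply/eqP; move: (H D); rewrite Dch CD.
Qed.

Lemma maxchain_upchain (C : {set P}) x0 : maxchain C -> x0 \in C ->
  exists z, exists2 s, minimal z & upchain z s /\ C = seqset (z :: s).
Proof.
move=> /maxchainP [Cch Cmax] x0C.
case: (chain_min Cch x0C) => z zC Hz.
have mz : minimal z.
  apply/forallP => y; apply/negP => yz.
  have : y |: C = C.
    apply: Cmax; last by apply/subsetP => u uC; rewrite !inE uC orbT.
    by apply: chainU1 => // x /Hz zx; rewrite (ltW (lt_le_trans yz zx)).
  move/setP => /(_ y); rewrite !inE eqxx /= => /esym /Hz zy.
  by move: (lt_le_trans yz zy); rewrite ltxx.
case: (@saturated_upchain #|C|.+1 C z (ltnSn _) zC Cch Hz).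
  by move=> D Dch CD _; apply: Cmax.
by move=> s Hs E; exists z, s.
Qed.

Lemma upchain_chain (z : P) s : upchain z s -> is_chain (seqset (z :: s)).
Proof.
elim: s z => [|w t IH] z.
  by move=> _; apply/is_chainP => x y; rewrite !inE => /eqP -> /eqP ->; rewrite lexx.
move=> H; rewrite seqset_cons; apply: chainU1; first by apply: IH; move: H; rewrite upchain_cons => /andP [].
have := order_path_min (@lt_trans _ P) (upchain_sorted H).
move/allP => Hall x; rewrite !inE => /Hall zx; by rewrite (ltW zx).
Qed.

Lemma upchain_sat (z : P) s : upchain z s ->
  forall v, (forall x, x \in z :: s -> (v <= x) || (x <= v)) -> z <= v -> v \in z :: s.
Proof.
elim: s z => [|w t IH] z.
  rewrite upchain_nil => M v _ zv; rewrite inE; case: (eqVneq v z) => // vz.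
  by move/forallP: M => /(_ v); rewrite lt_neqAle eq_sym vz zv.
rewrite upchain_cons => /andP [cov Ht] v Hv zv.
have wi : w \in [:: z, w & t] by rewrite !inE eqxx orbT.
case/orP: (Hv w wi) => [vw|wv].
  case: (eqVneq v w) => [->|vw']; first by rewrite !inE eqxx orbT.
  have vw2 : v < w by rewrite lt_neqAle vw' vw.
  case: (eqVneq v z) => [->|vz]; first by rewrite mem_head.
  have zv2 : z < v by rewrite lt_neqAle eq_sym vz zv.
  case/andP: cov => _ /forallP /(_ v); by rewrite zv2 vw2.
rewrite inE IH ?orbT // => x xt; apply: Hv; by rewrite inE xt orbT.
Qed.

Lemma upchain_maxchain (z : P) s : minimal z -> upchain z s -> maxchain (seqset (z :: s)).
Proof.
move=> mz H; rewrite /maxchain upchain_chain //=; apply/forallP => D.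
apply/implyP => /andP [Dch CD]; rewrite eqEsubset CD andbT.
apply/subsetP => v vD; rewrite inE; apply: upchain_sat => //.
  move=> x xs; move/is_chainP: Dch; apply => //.
  by move/subsetP: CD; apply; rewrite inE.
have zD : z \in D by move/subsetP: CD; apply; rewrite inE mem_head.
move/is_chainP: Dch => /(_ z v zD vD) /orP [//|vz].
case: (eqVneq v z) => [-> //|ne].
by move/forallP: mz => /(_ v); rewrite lt_neqAle ne vz.
Qed.

Lemma chainsum_seqset g (z : P) s : upchain z s ->
  chainsum g (seqset (z :: s)) = \sum_(x <- z :: s) g x.
Proof.
move=> H; rewrite (big_uniq _ (upchain_uniq H)) /chainsum.
by apply: eq_bigl => x; rewrite inE.
Qed.

Lemma exists_maxchain : exists C : {set P}, maxchain C.
Proof.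
have ch0 : is_chain (set0 : {set P}) by apply/is_chainP => x y; rewrite inE.
case: (@arg_maxnP {set P} set0 is_chain (fun C => #|C|) ch0) => C Cch Cmax.
exists C; rewrite /maxchain Cch /=; apply/forallP => D; apply/implyP => /andP [Dch CD].
by rewrite eq_sym eqEcard CD; apply: (Cmax D Dch).
Qed.

Lemma mcs_ub g (C : {set P}) : maxchain C -> chainsum g C <= maxchainsum g.
Proof.
by move=> H; apply: maxl_ub; apply: map_f; rewrite mem_enum inE.
Qed.

Lemma mcs_ex g : exists2 C : {set P}, maxchain C & maxchainsum g = chainsum g C.
Proof.
have : maxchainsum g \in [seq chainsum g C | C <- enum [set C : {set P} | maxchain C]].
  apply: maxl_mem; rewrite -size_eq0 size_map -cardE; apply/eqP => /eqP.
  case: exists_maxchain => C HC; rewrite cards_eq0 => /eqP /setP /(_ C).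
  by rewrite !inE HC.
by case/mapP => C; rewrite mem_enum inE => H ->; exists C.
Qed.

Lemma maxchain0 (C : {set P}) g : maxchain C -> C = set0 -> forall D : {set P}, chainsum g D = 0.
Proof.
move=> /maxchainP [_ Cmax] C0 D; rewrite /chainsum big1 // => x _.
have : [set x] = C.
  apply: Cmax; last by rewrite C0 sub0set.
  by apply/is_chainP => u v; rewrite !inE => /eqP -> /eqP ->; rewrite lexx.
by move/setP => /(_ x); rewrite C0 !inE eqxx.
Qed.

End Aux.

Lemma divz_shift (n : nat) (eps a b : int) : (0 < n)%N -> (eps * n%:Z + a <= b)%R ->
  (eps + (a %/ n%:Z)%Z <= (b %/ n%:Z)%Z)%R.
Proof.
move=> n0 H; have nz : (n%:Z != 0)%R by move: n0; clear H; case: n.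
rewrite -divzMDl //; apply: lez_pdiv2r => //.
Qed.

Unset Implicit Arguments.
Set Strict Implicit.

Theorem mainTheorem5 (d : Order.disp_t) (P : finPOrderType d)
  (eps : int) (n : nat) (xi : option P -> int) :
  (eps = 1 \/ eps = -1)%R ->
  (2 <= n)%N ->
  inS (n%:Z * eps)%R xi ->
  ((forall z : P, upsum (restr (xi1 n xi)) z = (upsum (restr xi) z %/ n%:Z)%Z) /\
   maxchainsum (restr (xi1 n xi)) = (maxchainsum (restr xi) %/ n%:Z)%Z) /\
  inS eps (xi1 n xi).
Proof.
move=> _ n2 [Hx HC].
have n0 : (0 < n)%N by apply: leq_trans n2.
set g := restr xi; set g1 := restr (xi1 n xi).
have Ha : forall z, upsum g1 z = (upsum g z %/ n%:Z)%Z := fun z => xi1_upsum n xi z.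
have Hmc : maxchainsum g1 = (maxchainsum g %/ n%:Z)%Z.
  apply/eqP; rewrite eq_le; apply/andP; split.
    case: (mcs_ex g1) => C HC1 ->.
    case: (set_0Vmem C) => [C0|[x0 x0C]].
      rewrite (maxchain0 g1 HC1 C0 C); case: (mcs_ex g) => C' _ ->.
      by rewrite (maxchain0 g HC1 C0 C') div0z.
    case: (maxchain_upchain HC1 x0C) => z [s mz [Hs CE]].
    rewrite CE chainsum_seqset //; apply: le_trans (upsum_ub g1 Hs) _.
    rewrite Ha; apply: lez_pdiv2r => //.
    case: (upsum_ex g z) => s' Hs' ->; rewrite -chainsum_seqset //.
    by apply: mcs_ub; exact: upchain_maxchain.
  case: (mcs_ex g) => C HC1 ->.
  case: (set_0Vmem C) => [C0|[x0 x0C]].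
    rewrite (maxchain0 g HC1 C0 C) div0z; case: (mcs_ex g1) => C' _ ->.
    by rewrite (maxchain0 g1 HC1 C0 C').
  case: (maxchain_upchain HC1 x0C) => z [s mz [Hs CE]].
  rewrite CE chainsum_seqset //; apply: le_trans (lez_pdiv2r _ (upsum_ub g Hs)) _ => //.
  rewrite -Ha; case: (upsum_ex g1 z) => s' Hs' ->; rewrite -chainsum_seqset //.
  by apply: mcs_ub; exact: upchain_maxchain.
split; first by split.
split.
  move=> x; rewrite /xi1; case M: (maxelt x).
    rewrite -[eps]addr0 -(div0z n%:Z); apply: divz_shift => //.
    by rewrite addr0 mulrC; apply: Hx.
  rewrite lerBrDr -/g upsumE; apply: divz_shift => //.
  by rewrite lerD2r mulrC; apply: Hx.
move=> C HC1; rewrite /=.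
case: (mcs_ex g) => C0 HC0 E0.
apply: le_trans (_ : (maxchainsum g1 + eps <= _)%R).
  by rewrite lerD2r; apply: mcs_ub.
rewrite Hmc addrC; apply: divz_shift => //.
by rewrite mulrC addrC E0; apply: HC.
Qed.
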